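(* Let $0<\alpha<1$ and $p,q>0$. If $\mathrm{Tr}\,R_{\alpha,p}(A,B)\le\mathrm{Tr}\,\mathcal{A}_{\alpha,q}(A,B)$ holds for all positive definite $2\times2$ matrices $A,B$, then $\min\{1,\alpha(1-\alpha)p\}\le q$.
   Context: For positive definite $A,B$: $R_{\alpha,p}(A,B):=\bigl(A^{\frac{1-\alpha}{2}p}B^{\alpha p}A^{\frac{1-\alpha}{2}p}\bigr)^{1/p}$ and $\mathcal{A}_{\alpha,q}(A,B):=((1-\alpha)A^q+\alpha B^q)^{1/q}$. $\mathrm{Tr}$ is the usual trace. *)

(* Defs.v *)
From HB Require Import structures.
From mathcomp Require Import all_boot all_order all_algebra.
From mathcomp Require Import complex.
From mathcomp Require Import reals exp.
Set Implicit Arguments. Unset Strict Implicit. Unset Printing Implicit Defensive.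
Import Order.TTheory GRing.Theory Num.Theory.
Local Open Scope ring_scope.
Local Open Scope complex_scope.

Section MatrixFunctions.
Variable R : realType.
Local Notation C := R[i].

Definition adjmx m n (A : 'M[C]_(m, n)) : 'M[C]_(n, m) := (map_mx conjc A)^T.

Definition posdef (A : 'M[C]_2) : Prop :=
  adjmx A = A /\
  forall v : 'cV[C]_2, v != 0 -> 0 < (adjmx v *m A *m v) 0 0.

(* Functional calculus f(A) for a 2x2 Hermitian matrix A via its (real)
   eigenvalues l1 >= l2: if l1 = l2 then A = l1 I and f(A) = f(l1) I;
   otherwise f(A) = (f(l1)(A - l2 I) - f(l2)(A - l1 I)) / (l1 - l2)
   (the spectral decomposition written with the spectral projections). *)
Definition mfun (f : R -> R) (A : 'M[C]_2) : 'M[C]_2 :=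
  let t := @complex.Re R (\tr A) in
  let d := @complex.Re R (\det A) in
  let s := Num.sqrt (t ^+ 2 - 4 * d) in
  let l1 := (t + s) / 2 in
  let l2 := (t - s) / 2 in
  if s == 0 then (f l1)%:C%:M
  else ((f l1 / (l1 - l2))%:C *: (A - l2%:C%:M)
        - (f l2 / (l1 - l2))%:C *: (A - l1%:C%:M)).

Definition mpow (A : 'M[C]_2) (r : R) : 'M[C]_2 := mfun (fun x => powR x r) A.

Definition Rmean (alpha p : R) (A B : 'M[C]_2) : 'M[C]_2 :=
  mpow (mpow A ((1 - alpha) * p / 2) *m mpow B (alpha * p)
          *m mpow A ((1 - alpha) * p / 2)) p^-1.

Definition Amean (alpha q : R) (A B : 'M[C]_2) : 'M[C]_2 :=
  mpow ((1 - alpha)%:C *: mpow A q + alpha%:C *: mpow B q) q^-1.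

End MatrixFunctions.

(* Main.v *)
Require Import Defs.
From HB Require Import structures.
From mathcomp Require Import all_boot all_order all_algebra.
From mathcomp Require Import complex.
From mathcomp Require Import reals sequences exp.
From mathcomp Require Import ring lra.
Set Implicit Arguments. Unset Strict Implicit. Unset Printing Implicit Defensive.
Import Order.TTheory GRing.Theory Num.Theory.
Local Open Scope ring_scope.
Local Open Scope complex_scope.

Section S.
Variable R : realType.
Local Notation C := R[i].

Lemma det2 (T : comRingType) (A : 'M[T]_2) : \det A = A 0 0 * A 1 1 - A 0 1 * A 1 0.
Proof.
rewrite (expand_det_row _ 0) !big_ord_recl big_ord0 /cofactor !det_mx11 !mxE /=.
rewrite addr0 (_ : (-1) ^+ _ = 1) ?mul1r; last by rewrite /= expr0.
rewrite (_ : (-1) ^+ _ = -1) ?mulN1r ?mulrN; last by rewrite /= expr1.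
by congr (A _ _ * A _ _ - A _ _ * A _ _); apply/val_inj.
Qed.

Definition Cm (A : 'M[R]_2) : 'M[C]_2 := map_mx (real_complex R) A.

Lemma trC (A : 'M[R]_2) : \tr (Cm A) = (\tr A)%:C.
Proof. by rewrite /Cm trace_map_mx. Qed.

Definition mfunR (f : R -> R) (A : 'M[R]_2) : 'M[R]_2 :=
  let t := \tr A in let d := \det A in
  let s := Num.sqrt (t ^+ 2 - 4 * d) in
  let l1 := (t + s) / 2 in let l2 := (t - s) / 2 in
  if s == 0 then (f l1)%:M
  else ((f l1 / (l1 - l2)) *: (A - l2%:M) - (f l2 / (l1 - l2)) *: (A - l1%:M)).

Lemma mfunC f A : mfun f (Cm A) = Cm (mfunR f A).
Proof.
rewrite /mfun /mfunR trC /Cm det_map_mx /=.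
case: ifP => _; first by rewrite map_scalar_mx.
rewrite map_mxB !map_mxZ !map_mxB !map_scalar_mx.
by []. Qed.

Lemma CmM A B : Cm A *m Cm B = Cm (A *m B).
Proof. by rewrite /Cm map_mxM. Qed.
Lemma CmD A B : Cm A + Cm B = Cm (A + B).
Proof. by rewrite /Cm map_mxD. Qed.
Lemma CmZ a A : a%:C *: Cm A = Cm (a *: A).
Proof. by rewrite /Cm map_mxZ. Qed.

Lemma mxtraceB2 (X Y : 'M[R]_2) : \tr (X - Y) = \tr X - \tr Y.
Proof. exact: raddfB. Qed.

Lemma trmfunR f A : \tr (mfunR f A) =
  f ((\tr A + Num.sqrt (\tr A ^+ 2 - 4 * \det A)) / 2) +
  f ((\tr A - Num.sqrt (\tr A ^+ 2 - 4 * \det A)) / 2).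
Proof.
rewrite /mfunR; set s := Num.sqrt _; case: ifP => /eqP s0.
  by rewrite mxtrace_scalar s0 subr0 addr0 mulr2n.
rewrite mxtraceB2 !mxtraceZ !mxtraceB2 !mxtrace_scalar.
have h : (\tr A + s) / 2 - (\tr A - s) / 2 != 0.
  by apply/eqP => h; apply: s0; move: h; lra.
field; move: h; apply: contra => /eqP h; apply/eqP; lra.
Qed.

Lemma ord2 (i : 'I_2) : i = 0 \/ i = 1.
Proof. case: i => [[|[|//]] Hi]; [left|right]; exact: val_inj. Qed.
Lemma mx2P (X Y : 'M[R]_2) : X 0 0 = Y 0 0 -> X 0 1 = Y 0 1 ->
  X 1 0 = Y 1 0 -> X 1 1 = Y 1 1 -> X = Y.
Proof.
move=> h00 h01 h10 h11; apply/matrixP => i j.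
by case: (ord2 i) => ->; case: (ord2 j) => ->.
Qed.

Definition cs (t : R) := (1 - t ^+ 2) / (1 + t ^+ 2).
Definition sn (t : R) := (2 * t) / (1 + t ^+ 2).

Lemma t2 (t : R) : 1 + t ^+ 2 != 0.
Proof. apply/eqP => h; have : 0 <= t ^+ 2 by apply: sqr_ge0. lra. Qed.

Lemma cs2 t : cs t ^+ 2 + sn t ^+ 2 = 1.
Proof. rewrite /cs /sn; field; exact: t2. Qed.

Definition W (t x y : R) : 'M[R]_2 := \matrix_(i, j)
  (if i == 0 then (if j == 0 then cs t ^+ 2 * x + sn t ^+ 2 * y else cs t * sn t * (x - y))
   else (if j == 0 then cs t * sn t * (x - y) else sn t ^+ 2 * x + cs t ^+ 2 * y)).

Lemma W00 t x y : W t x y 0 0 = cs t ^+ 2 * x + sn t ^+ 2 * y. Proof. by rewrite mxE. Qed.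
Lemma W01 t x y : W t x y 0 1 = cs t * sn t * (x - y). Proof. by rewrite mxE. Qed.
Lemma W10 t x y : W t x y 1 0 = cs t * sn t * (x - y). Proof. by rewrite mxE. Qed.
Lemma W11 t x y : W t x y 1 1 = sn t ^+ 2 * x + cs t ^+ 2 * y. Proof. by rewrite mxE. Qed.
Definition WE := (W00, W01, W10, W11).

Lemma trW t x y : \tr (W t x y) = x + y.
Proof.
rewrite /mxtrace !big_ord_recl big_ord0 addr0.
rewrite (_ : lift 0 ord0 = 1 :> 'I_2); last by apply/val_inj.
rewrite !WE /cs /sn; field; exact: t2.
Qed.

Lemma detW t x y : \det (W t x y) = x * y.
Proof. rewrite det2 !WE /cs /sn; field; exact: t2. Qed.

Lemma scalar00 (a : R) : (a%:M : 'M[R]_2) 0 0 = a. Proof. by rewrite mxE. Qed.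
Lemma scalar11 (a : R) : (a%:M : 'M[R]_2) 1 1 = a. Proof. by rewrite mxE. Qed.
Lemma scalar01 (a : R) : (a%:M : 'M[R]_2) 0 1 = 0. Proof. by rewrite mxE. Qed.
Lemma scalar10 (a : R) : (a%:M : 'M[R]_2) 1 0 = 0. Proof. by rewrite mxE. Qed.
Definition scalarE := (scalar00, scalar01, scalar10, scalar11).

Lemma mfunW (f : R -> R) t x y : mfunR f (W t x y) = W t (f x) (f y).
Proof.
rewrite /mfunR trW detW.
have -> : (x + y) ^+ 2 - 4 * (x * y) = (x - y) ^+ 2 by ring.
rewrite sqrtr_sqr.
have [xy|xy|xy] := ltgtP x y.
- rewrite ltr0_norm ?subr_lt0 // (_ : - (x - y) == 0 = false); last first.
    by apply/negbTE; rewrite oppr_eq0 subr_eq0 lt_eqF.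
  have -> : (x + y + - (x - y)) / 2 = y by field.
  have -> : (x + y - - (x - y)) / 2 = x by field.
  have hyx : y - x != 0 by rewrite subr_eq0 gt_eqF.
  apply: mx2P; rewrite !mxE /= ?mulr1n ?mulr0n /cs /sn; field; by rewrite ?t2 ?hyx.
- rewrite gtr0_norm ?subr_gt0 // (_ : (x - y) == 0 = false); last first.
    by apply/negbTE; rewrite subr_eq0 gt_eqF.
  have -> : (x + y + (x - y)) / 2 = x by field.
  have -> : (x + y - (x - y)) / 2 = y by field.
  have hyx : x - y != 0 by rewrite subr_eq0 gt_eqF.
  apply: mx2P; rewrite !mxE /= ?mulr1n ?mulr0n /cs /sn; field; by rewrite ?t2 ?hyx.
- rewrite xy subrr normr0 eqxx addr0.
  have -> : (y + y) / 2 = y by field.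
  apply: mx2P; rewrite !scalarE !WE /cs /sn; field; by rewrite ?t2.
Qed.

Lemma adjCW t x y : adjmx (Cm (W t x y)) = Cm (W t x y).
Proof.
apply/matrixP => i j; rewrite !mxE conjc_real.
by case: (ord2 i) => ->; case: (ord2 j) => ->.
Qed.

Lemma pos2 (x y X Y : R) : 0 < x -> 0 < y -> 0 <= X -> 0 <= Y -> 0 < X + Y ->
  0 < x * X + y * Y.
Proof.
move=> x0 y0 X0 Y0 XY; have [X1|X1] := ltP 0 X.
  have : 0 < x * X by apply: mulr_gt0.
  have : 0 <= y * Y by apply: mulr_ge0; lra.
  lra.
have : 0 < y * Y by apply: mulr_gt0; lra.
have : 0 <= x * X by apply: mulr_ge0; lra.
lra.
Qed.

Lemma posW t x y : 0 < x -> 0 < y -> posdef (Cm (W t x y)).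
Proof.
move=> x0 y0; split; first exact: adjCW.
move=> v v0.
rewrite !mxE !big_ord_recl !big_ord0 !addr0 !mxE !big_ord_recl !big_ord0 !addr0 !mxE.
rewrite (_ : lift 0 ord0 = 1 :> 'I_2); last by apply/val_inj.
rewrite /=.
case E0: (v 0 0) => [a b]; case E1: (v 1 0) => [c d].
have hpos : 0 < a ^+ 2 + b ^+ 2 + c ^+ 2 + d ^+ 2.
  rewrite lt_neqAle; apply/andP; split; last first.
    by rewrite !addr_ge0 ?sqr_ge0.
  apply/negP => /eqP h; move/negP: v0; apply; apply/eqP/matrixP => i j.
  have ha : a = 0 by apply/eqP; rewrite -sqrf_eq0; apply/eqP; nra.
  have hb : b = 0 by apply/eqP; rewrite -sqrf_eq0; apply/eqP; nra.
  have hc : c = 0 by apply/eqP; rewrite -sqrf_eq0; apply/eqP; nra.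
  have hd : d = 0 by apply/eqP; rewrite -sqrf_eq0; apply/eqP; nra.
  rewrite [j]ord1 mxE; case: (ord2 i) => ->; rewrite ?E0 ?E1 ?ha ?hb ?hc ?hd //.
rewrite /real_complex_def -[0]/(0 +i* 0); simpc.
set C0 := cs t; set S0 := sn t; have h1 : C0 ^+ 2 + S0 ^+ 2 = 1 by exact: cs2.
apply/andP; split; first by apply/eqP; ring.
have H : 0 < x * ((C0 * a + S0 * c) ^+ 2 + (C0 * b + S0 * d) ^+ 2)
           + y * ((S0 * a - C0 * c) ^+ 2 + (S0 * b - C0 * d) ^+ 2).
  apply: pos2 => //; rewrite ?addr_ge0 ?sqr_ge0 //.
  have -> : (C0 * a + S0 * c) ^+ 2 + (C0 * b + S0 * d) ^+ 2 +
     ((S0 * a - C0 * c) ^+ 2 + (S0 * b - C0 * d) ^+ 2) =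
     (C0 ^+ 2 + S0 ^+ 2) * (a ^+ 2 + b ^+ 2 + c ^+ 2 + d ^+ 2) by ring.
  by rewrite h1 mul1r.
apply: (lt_le_trans H); rewrite le_eqVlt; apply/orP; left; apply/eqP; ring.
Qed.
End S.

Section A.
Variable R : realType.

Lemma ln_le (y : R) : 0 < y -> ln y <= y - 1.
Proof.
move=> y0; have := expR_ge1Dx (ln y); rewrite lnK ?posrE //; lra.
Qed.

Lemma ln_ge (x : R) : 0 < x -> 1 - x^-1 <= ln x.
Proof.
move=> x0; have xi : 0 < x^-1 by rewrite invr_gt0.
have := ln_le xi; rewrite lnV ?posrE //; lra.
Qed.

Lemma powR_lb (x s : R) : 0 < x -> 0 <= s -> 1 + s * (1 - x^-1) <= powR x s.
Proof.
move=> x0 s0; rewrite /powR gt_eqF //.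
apply: le_trans (expR_ge1Dx _); rewrite lerD2l; apply: ler_wpM2l => //.
exact: ln_ge.
Qed.

Lemma powR_ub (y r : R) : 0 < y -> y <= 1 -> 0 <= r -> powR y r <= (1 + r * (1 - y))^-1.
Proof.
move=> y0 y1 r0; rewrite /powR gt_eqF //.
have h1 : 1 + r * (1 - y) <= expR (- (r * ln y)).
  apply: le_trans (expR_ge1Dx _); rewrite lerD2l -mulrN; apply: ler_wpM2l => //.
  have := ln_le y0; lra.
have hp : 0 < 1 + r * (1 - y).
  have : 0 <= r * (1 - y) by apply: mulr_ge0; lra.
  lra.
rewrite -[expR (r * ln y)]invrK -expRN lef_pV2 ?posrE ?expR_gt0 //.
Qed.

Lemma arith (r k P d X w v g z : R) : 0 < k -> 0 < P -> 1 < r -> 0 < d -> d <= 1/2 ->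
  g = r * k - P -> 0 < g ->
  d * (r * k + r ^+ 2 * k ^+ 2 + 2 * P) <= g / 2 ->
  X = r * ((1 - d ^+ 2) * k * d) -> 
  w <= 1 + d * (1 + 2 * d) -> v <= 1 - X + X ^+ 2 -> 0 <= z -> z <= g / 4 ->
  1 + P * (1 - w) <= v + d * z -> False.
Proof.
move=> k0 P0 r1 d0 d1 eg g0 hK eX hw hv z0 zg h.
have rk0 : 0 < r * k by apply: mulr_gt0 => //; lra.
have hX0 : 0 <= X.
  rewrite eX; apply: mulr_ge0; first lra.
  apply: mulr_ge0; last lra; apply: mulr_ge0; last lra.
  have : d ^+ 2 <= 1 by nra. lra.
have hXu : X <= r * k * d.
  rewrite eX; have : 0 <= r * k * d ^+ 3 by apply: mulr_ge0; [lra| apply: exprn_ge0; lra].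
  move=> ?; have -> : r * ((1 - d ^+ 2) * k * d) = r * k * d - r * k * d ^+ 3 by ring.
  lra.
have a1 : - (P * (d * (1 + 2 * d))) <= P * (1 - w).
  rewrite -mulrN; apply: ler_wpM2l; lra.
have a2 : d * z <= d * (g / 4) by apply: ler_wpM2l; lra.
have a3 : X ^+ 2 <= (r * k * d) ^+ 2.
  rewrite ler_sqr ?nnegrE //; apply: mulr_ge0; lra.
have a4 : r * k * d ^+ 3 <= r * k * d ^+ 2.
  apply: ler_wpM2l; first lra.
  have -> : d ^+ 3 = d * d * d by rewrite !exprS expr0 mulr1 mulrA.
  have -> : d ^+ 2 = d * d by rewrite !exprS expr0 mulr1.
  have : 0 <= d * d by apply: mulr_ge0; lra.
  nra.
have a5 : d * (d * (r * k + r ^+ 2 * k ^+ 2 + 2 * P)) <= d * (g / 2).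
  by apply: ler_wpM2l => //; lra.
have eX' : X = r * k * d - r * k * d ^+ 3 by rewrite eX; ring.
have a6 : 0 < d * g by apply: mulr_gt0.
rewrite eg in a2 a5 a6.
nra.
Qed.

Lemma final (k P r : R) : 0 < k -> k <= 1/4 -> 0 < P -> 1 < r -> P < r * k ->
  exists d0, 0 < d0 /\ forall d, 0 < d -> d <= d0 ->
  let T := 1 + d ^+ 2 in let D := (1 - d ^+ 2) ^+ 2 * (k * d) + d ^+ 2 in
  powR ((T + Num.sqrt (T ^+ 2 - 4 * D)) / 2) r +
  powR ((T - Num.sqrt (T ^+ 2 - 4 * D)) / 2) r < powR (1 - d) P.
Proof.
move=> k0 k4 P0 r1 Prk.
set g := r * k - P.
have g0 : 0 < g by rewrite /g; lra.
set K := r * k + r ^+ 2 * k ^+ 2 + 2 * P.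
have rk0 : 0 < r * k by apply: mulr_gt0 => //; lra.
have K0 : 0 < K.
  rewrite /K; have : 0 <= r ^+ 2 * k ^+ 2 by apply: mulr_ge0; apply: sqr_ge0.
  lra.
set z0 := powR (g / 4) (r - 1)^-1.
have z00 : 0 < z0 by apply: powR_gt0; lra.
have gK0 : 0 < g / (2 * K) by apply: divr_gt0 => //; lra.
exists (Num.min (1/2) (Num.min (g / (2 * K)) z0)); split.
  rewrite lt_min; apply/andP; split; first lra.
  by rewrite lt_min; apply/andP; split.
move=> d d0; rewrite le_min => /andP [hd1]; rewrite le_min => /andP [hdK hdz].
rewrite /=.
set T := 1 + d ^+ 2. set D := (1 - d ^+ 2) ^+ 2 * (k * d) + d ^+ 2.
have kd : k * d <= 1 / 8 by nra.
have hu0 : 0 <= 1 - 4 * (k * d) by lra.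
set u := Num.sqrt (1 - 4 * (k * d)).
have u0 : 0 <= u by apply: sqrtr_ge0.
have hu : u ^+ 2 = 1 - 4 * (k * d) by apply: sqr_sqrtr.
have u1 : u <= 1 by nra.
have eta1 : d ^+ 2 <= 1 / 4 by nra.
have eta0 : 0 < d ^+ 2 by apply: exprn_gt0.
have -> : Num.sqrt (T ^+ 2 - 4 * D) = (1 - d ^+ 2) * u.
  have -> : T ^+ 2 - 4 * D = (1 - d ^+ 2) ^+ 2 * (1 - 4 * (k * d)) by rewrite /T /D; ring.
  rewrite sqrtrM ?sqrtr_sqr ?ger0_norm //; [lra | apply: sqr_ge0].
set m1 := (T + (1 - d ^+ 2) * u) / 2.
set m2 := (T - (1 - d ^+ 2) * u) / 2.
have hm1u : m1 <= 1 by rewrite /m1 /T; nra.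
have hm1l : 0 < m1 by rewrite /m1 /T; nra.
have h1u : 2 * (k * d) <= 1 - u by nra.
have hm1k : (1 - d ^+ 2) * k * d <= 1 - m1.
  have -> : 1 - m1 = (1 - d ^+ 2) * ((1 - u) / 2) by rewrite /m1 /T; field.
  rewrite -mulrA; apply: ler_wpM2l; lra.
have hm2l : 0 <= m2 by rewrite /m2 /T; nra.
have h2u : 1 - u <= 4 * (k * d) by nra.
have hm2u : m2 <= d.
  have -> : m2 = d ^+ 2 + (1 - d ^+ 2) * ((1 - u) / 2) by rewrite /m2 /T; field.
  have : (1 - d ^+ 2) * ((1 - u) / 2) <= (1 - u) / 2 by nra.
  have : d ^+ 2 <= d / 2 by nra.
  have : k * d <= d / 4 by nra.
  lra.
set X := r * ((1 - d ^+ 2) * k * d).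
have X0 : 0 <= X.
  rewrite /X; apply: mulr_ge0; first lra.
  apply: mulr_ge0; last lra; apply: mulr_ge0; lra.
set v := (1 + X)^-1.
have B1 : m1 `^ r <= v.
  apply: (le_trans (powR_ub hm1l hm1u _)); first lra.
  rewrite /v lef_pV2 ?posrE; first by rewrite lerD2l /X; apply: ler_wpM2l; lra.
    have : 0 <= r * (1 - m1) by apply: mulr_ge0; lra.
    lra.
  lra.
have hv : v <= 1 - X + X ^+ 2.
  have e : (1 + X) * v = 1 by rewrite /v mulfV //; apply/eqP => h; lra.
  have v0 : 0 <= v by rewrite /v invr_ge0; lra.
  have v1 : v <= 1 by rewrite /v invr_le1 ?unitfE; [lra | apply/eqP => h; lra | lra].
  have : 0 <= X ^+ 2 * (1 - v) by apply: mulr_ge0; [apply: sqr_ge0 | lra].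
  nra.
set z := d `^ (r - 1).
have z0' : 0 <= z by apply: powR_ge0.
have zg : z <= g / 4.
  have -> : g / 4 = z0 `^ (r - 1).
    rewrite /z0 -powRrM mulVf ?powRr1 //; first lra.
    by apply/eqP => h; lra.
  apply: ge0_ler_powR => //; rewrite ?nnegrE; lra.
have B2 : m2 `^ r <= d * z.
  rewrite /z mulr_powRB1; [ | lra | lra].
  apply: ge0_ler_powR => //; rewrite ?nnegrE; lra.
set w := (1 - d)^-1.
have hw : w <= 1 + d * (1 + 2 * d).
  have e : (1 - d) * w = 1 by rewrite /w mulfV //; apply/eqP => h; lra.
  have w0 : 0 <= w by rewrite /w invr_ge0; lra.
  nra.
have B3 : 1 + P * (1 - w) <= (1 - d) `^ P by apply: powR_lb; lra.
rewrite ltNge; apply/negP => h.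
apply: (arith k0 P0 r1 d0 hd1 (erefl g) g0 _ (erefl X) hw hv z0' zg).
  have -> : g / 2 = (g / (2 * K)) * K by field; rewrite gt_eqF.
  exact: (ler_wpM2r (ltW K0) hdK).
lra.
Qed.
End A.

Section M.
Variable R : realType.
Local Notation C := R[i].

Lemma tr2 (M : 'M[R]_2) : \tr M = M 0 0 + M 1 1.
Proof.
rewrite /mxtrace !big_ord_recl big_ord0 addr0.
by rewrite (_ : lift 0 ord0 = 1 :> 'I_2); last by apply/val_inj.
Qed.

Lemma mul2E (X Y : 'M[R]_2) i j : (X *m Y) i j = X i 0 * Y 0 j + X i 1 * Y 1 j.
Proof.
rewrite mxE !big_ord_recl big_ord0 addr0.
by rewrite (_ : lift 0 ord0 = 1 :> 'I_2); last by apply/val_inj.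
Qed.

Lemma l1ge (M : 'M[R]_2) : M 0 1 = M 1 0 ->
  M 0 0 <= (\tr M + Num.sqrt (\tr M ^+ 2 - 4 * \det M)) / 2.
Proof.
move=> h; rewrite tr2 det2 -h.
have -> : (M 0 0 + M 1 1) ^+ 2 - 4 * (M 0 0 * M 1 1 - M 0 1 * M 0 1) =
  (M 0 0 - M 1 1) ^+ 2 + 4 * M 0 1 ^+ 2 by ring.
have h1 : `|M 0 0 - M 1 1| <= Num.sqrt ((M 0 0 - M 1 1) ^+ 2 + 4 * M 0 1 ^+ 2).
  rewrite -sqrtr_sqr ler_sqrt; last by rewrite addr_ge0 ?sqr_ge0 // mulr_ge0 ?sqr_ge0.
  by rewrite lerDl mulr_ge0 ?sqr_ge0.
have h2 := ler_norm (M 0 0 - M 1 1).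
lra.
Qed.

Lemma W0E (x y : R) : (W 0 x y 0 0 = x) * (W 0 x y 0 1 = 0) * (W 0 x y 1 0 = 0) * (W 0 x y 1 1 = y).
Proof. by rewrite !WE /cs /sn; do !split; field. Qed.

Lemma M00 (e1 e2 : R) t : (W 0 1 e1 *m W t 1 e2 *m W 0 1 e1) 0 0 = cs t ^+ 2 + sn t ^+ 2 * e2.
Proof. by rewrite !mul2E !W0E !WE; ring. Qed.

Lemma Msym (e1 e2 : R) t : (W 0 1 e1 *m W t 1 e2 *m W 0 1 e1) 0 1 =
   (W 0 1 e1 *m W t 1 e2 *m W 0 1 e1) 1 0.
Proof. by rewrite !mul2E !W0E !WE; ring. Qed.

Lemma trN (a t e : R) : \tr ((1 - a) *: W 0 1 e + a *: W t 1 e) = 1 + e.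
Proof. by rewrite mxtraceD !mxtraceZ !trW; ring. Qed.

Lemma addZE (a b : R) (X Y : 'M[R]_2) i j : (a *: X + b *: Y) i j = a * X i j + b * Y i j.
Proof. by rewrite !mxE. Qed.

Lemma detN (a t e : R) : \det ((1 - a) *: W 0 1 e + a *: W t 1 e) =
  (1 - e) ^+ 2 * (a * (1 - a) * sn t ^+ 2) + e.
Proof.
rewrite det2 !addZE !W0E !WE /cs /sn; field; exact: t2.
Qed.

End M.

Local Close Scope complex_scope.
Theorem theorem4p12 (R : realType) (alpha p q : R) :
  0 < alpha -> alpha < 1 -> 0 < p -> 0 < q ->
  (forall A B : 'M[R[i]]_2, posdef A -> posdef B ->
     \tr (Rmean alpha p A B) <= \tr (Amean alpha q A B)) ->
  Num.min 1 (alpha * (1 - alpha) * p) <= q.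
Proof.
move=> a0 a1 p0 q0 H.
rewrite leNgt; apply/negP; rewrite lt_min => /andP [q1 qk].
set k := alpha * (1 - alpha).
have k0 : 0 < k by rewrite /k; apply: mulr_gt0; lra.
have k4 : k <= 1 / 4 by rewrite /k; have := sqr_ge0 (2 * alpha - 1); nra.
set P := p^-1; set r := q^-1.
have P0 : 0 < P by rewrite /P invr_gt0.
have r1 : 1 < r by rewrite /r invf_gt1.
have Prk : P < r * k.
  have e : r * k - P = (k * p - q) / (p * q).
    by rewrite /r /P; field; apply/andP; split; rewrite gt_eqF.
  have : 0 < (k * p - q) / (p * q) by apply: divr_gt0; [rewrite /k; lra | apply: mulr_gt0].
  lra.
have [d0 [d00 Hd]] := final k0 k4 P0 r1 Prk.
set t := Num.sqrt d0 / 2.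
have t0 : 0 < t by rewrite /t divr_gt0 // sqrtr_gt0.
have tt : t ^+ 2 = d0 / 4.
  by rewrite /t expr_div_n sqr_sqrtr; [field | lra].
set d := sn t ^+ 2.
have dpos : 0 < d.
  rewrite /d /sn exprn_gt0 // divr_gt0 //; first lra.
  have : 0 <= t ^+ 2 by apply: sqr_ge0.
  lra.
have dle : d <= d0.
  have e : sn t ^+ 2 = 4 * t ^+ 2 * ((1 + t ^+ 2) ^+ 2)^-1.
    by rewrite /sn; field; exact: t2.
  have : ((1 + t ^+ 2) ^+ 2)^-1 <= 1.
    rewrite invr_le1 ?unitfE; first by nra.
      by apply: expf_neq0; exact: t2.
    by apply: exprn_gt0; nra.
  have : 0 <= t ^+ 2 by apply: sqr_ge0.
  rewrite /d e; nra.
have Hfin := Hd d dpos dle.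
move: Hfin => /=; rewrite ltNge => /negP; apply.
set eta := d ^+ 2.
have eta0 : 0 < eta by rewrite /eta exprn_gt0.
set eps := powR eta r.
have eps0 : 0 < eps by rewrite /eps powR_gt0.
have epsq : powR eps q = eta.
  by rewrite /eps -powRrM /r mulVf ?gt_eqF // powRr1 // ltW.
have HH := H (Cm (W 0 1 eps)) (Cm (W t 1 eps)) (posW 0 ltr01 eps0) (posW t ltr01 eps0).
rewrite /Rmean /Amean /mpow !mfunC !mfunW /= !powR1 epsq !CmM mfunC !CmZ CmD mfunC !trC !trmfunR in HH.
rewrite lecR in HH.
rewrite trN detN -/k -/d in HH.
apply: le_trans HH.
set e1 := eps `^ ((1 - alpha) * p / 2); set e2 := eps `^ (alpha * p).
set M := (W 0 1 e1 *m W t 1 e2 *m W 0 1 e1).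
have hM := l1ge (Msym e1 e2 t).
rewrite M00 in hM.
have ecs : cs t ^+ 2 = 1 - d by rewrite /d -(cs2 t); ring.
have hc : 0 <= 1 - d by rewrite -ecs sqr_ge0.
apply: (le_trans (y := powR ((\tr M + Num.sqrt (\tr M ^+ 2 - 4 * \det M)) / 2) P)).
  apply: ge0_ler_powR; rewrite ?nnegrE; first by rewrite ltW.
      by rewrite -ecs sqr_ge0.
    apply: le_trans hM; rewrite ecs.
    have : 0 <= sn t ^+ 2 * e2 by rewrite mulr_ge0 ?sqr_ge0 ?powR_ge0.
    lra.
  apply: le_trans hM; rewrite ecs.
  have : 0 <= sn t ^+ 2 * e2 by rewrite mulr_ge0 ?sqr_ge0 ?powR_ge0.
  lra.
by rewrite lerDl powR_ge0.
Qed.
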